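(* For every default ABMN solution, the central ratio $\frac{n_{-1}-n_0}{m_0-m_{-1}}$ lies in $(0,\infty)$. For every $x\in(0,\infty)$ there is exactly one default ABMN solution whose central ratio equals $x$.
   Context: ABMN system on $\mathbb{Z}$: real variables $a_i,b_i\ge0$, $m_i,n_i$ with, for all $i$, $(a_i+b_i)(m_i+a_i)=a_im_{i+1}+b_im_{i-1}$, $(a_i+b_i)(n_i+b_i)=a_in_{i+1}+b_in_{i-1}$, $(a_i+b_i)^2=b_i(m_{i+1}-m_{i-1})$, $(a_i+b_i)^2=a_i(n_{i-1}-n_{i+1})$. Solutions considered are positive ($a_i,b_i>0$ for all $i$), so $m_{\pm\infty}=\lim_{i\to\pm\infty}m_i$, $n_{\pm\infty}=\lim_{i\to\pm\infty}n_i$ exist in $\mathbb{R}$. A (positive) solution is default if $m_{-\infty}=0$, $n_\infty=0$ and $m_0-m_{-1}=1$. The central ratio is $\frac{n_{-1}-n_0}{m_0-m_{-1}}$. *)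

(* Defs.v *)
From Stdlib Require Import Reals ZArith.
Open Scope R_scope.

Definition ABMN (a b m n : Z -> R) : Prop :=
  forall i : Z,
    (a i + b i) * (m i + a i) = a i * m (i + 1)%Z + b i * m (i - 1)%Z /\
    (a i + b i) * (n i + b i) = a i * n (i + 1)%Z + b i * n (i - 1)%Z /\
    (a i + b i) ^ 2 = b i * (m (i + 1)%Z - m (i - 1)%Z) /\
    (a i + b i) ^ 2 = a i * (n (i - 1)%Z - n (i + 1)%Z).

Definition positive_ABMN (a b m n : Z -> R) : Prop :=
  ABMN a b m n /\ forall i : Z, 0 < a i /\ 0 < b i.

Definition lim_pinfty (u : Z -> R) (L : R) : Prop :=
  forall eps : R, 0 < eps -> exists N : Z, forall i : Z, (N <= i)%Z -> Rabs (u i - L) < eps.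
Definition lim_minfty (u : Z -> R) (L : R) : Prop :=
  forall eps : R, 0 < eps -> exists N : Z, forall i : Z, (i <= N)%Z -> Rabs (u i - L) < eps.

Definition default_ABMN (a b m n : Z -> R) : Prop :=
  positive_ABMN a b m n /\ lim_minfty m 0 /\ lim_pinfty n 0 /\
  m 0%Z - m (-1)%Z = 1.

Definition central_ratio (m n : Z -> R) : R :=
  (n (-1)%Z - n 0%Z) / (m 0%Z - m (-1)%Z).

(* Main.v *)
Require Import Defs.
From Stdlib Require Import Reals Lra Lia Psatz ZArith.
Open Scope R_scope.

Definition Fa (p q : R) : R :=
  let P := q + 2*p in let Q := q^2/p in (-P + sqrt (P^2 + 8*P*Q))/4.
Definition F (s : R*R) : R*R :=
  (Fa (fst s) (snd s), (Fa (fst s) (snd s))^2/(snd s + 2*fst s)).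

Lemma F_spec p q : 0 < p -> 0 < q ->
  0 < fst (F (p,q)) /\ 0 < snd (F (p,q)) /\
  fst (F (p,q))^2 = snd (F (p,q)) * (q + 2*p) /\
  p * (fst (F (p,q)) + 2 * snd (F (p,q))) = q^2.
Proof.
  intros Hp Hq. unfold F; cbn [fst snd]. unfold Fa.
  set (P := q + 2*p). set (Q := q^2/p).
  assert (HP : 0 < P) by (unfold P; lra).
  assert (HQ : 0 < Q) by (unfold Q; apply Rdiv_lt_0_compat; nra).
  assert (HpQ : p * Q = q^2) by (unfold Q; field; lra).
  set (r := sqrt (P^2 + 8*P*Q)).
  assert (Hr2 : r * r = P^2 + 8*P*Q) by (apply sqrt_sqrt; nra).
  assert (Hr0 : 0 <= r) by apply sqrt_pos.
  assert (HrP : P < r) by nra.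
  set (a := (-P + r)/4).
  assert (Ha : 0 < a) by (unfold a; lra).
  assert (Hquad : P * a + 2 * a^2 = P * Q) by (unfold a; nra).
  repeat split.
  - exact Ha.
  - apply Rdiv_lt_0_compat; nra.
  - field. lra.
  - assert (E : a + 2 * (a^2/P) = Q).
    { apply (Rmult_eq_reg_l P); [|lra]. field_simplify; [|lra]. lra. }
    rewrite E. exact HpQ.
Qed.

Definition fw (s0 : R*R) (k : nat) : R*R := Nat.iter k F s0.

Lemma fw_S s0 k : fw s0 (S k) = F (fw s0 k).
Proof. reflexivity. Qed.

Lemma fw_pos s0 : 0 < fst s0 -> 0 < snd s0 -> forall k, 0 < fst (fw s0 k) /\ 0 < snd (fw s0 k).
Proof.
  intros H1 H2 k; induction k as [|k IH]; [simpl; auto|].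
  rewrite fw_S. destruct (fw s0 k) as [p q]. destruct IH.
  destruct (F_spec p q) as [? [? _]]; auto.
Qed.

Fixpoint psum (u : nat -> R) (K : nat) : R :=
  match K with O => 0 | S K => psum u K + u K end.

Lemma psum_ext u v : (forall k, u k = v k) -> forall K, psum u K = psum v K.
Proof. intros H K; induction K; simpl; [auto| rewrite IHK, H; auto]. Qed.

Lemma psum_mono u : (forall k, 0 <= u k) -> forall K j, psum u K <= psum u (K + j).
Proof.
  intros H K j; induction j as [|j IH].
  - rewrite Nat.add_0_r; lra.
  - rewrite Nat.add_succ_r; simpl; specialize (H (K+j)%nat); lra.
Qed.

Lemma psum_cv u : (forall k, 0 <= u k) -> (exists B, forall K, psum u K <= B) ->
  exists L, Un_cv (psum u) L.
Proof.
  intros H [B HB].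
  destruct (growing_cv (psum u)) as [L HL].
  - intro n; simpl; specialize (H n); lra.
  - exists B. intros x [i ->]. apply HB.
  - exists L; exact HL.
Qed.

Lemma frac_le a b c d : 0 < b -> 0 < d -> a*d <= c*b -> a/b <= c/d.
Proof.
  intros Hb Hd H.
  replace (a/b) with ((a*d)*/(b*d)) by (field; split; lra).
  replace (c/d) with ((c*b)*/(b*d)) by (field; split; lra).
  apply Rmult_le_compat_r; [left; apply Rinv_0_lt_compat; nra | assumption].
Qed.

Definition vv (s : R*R) : R := fst s ^2 / (snd s * (fst s + 2 * snd s)).
Definition cc (s : R*R) : R := fst s + 2 * snd s.

Lemma v_grow p q : 0 < p -> 0 < q -> 9 * vv (p,q) <= vv (F (p,q)).
Proof.
  intros Hp Hq. destruct (F_spec p q Hp Hq) as [H1 [H2 [H3 H4]]].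
  unfold vv. cbn [fst snd].
  set (p' := fst (F (p,q))) in *. set (q' := snd (F (p,q))) in *. clearbody p' q'.
  replace (9 * (p^2/(q*(p+2*q)))) with ((9*p^2)/(q*(p+2*q))) by (field; repeat split; lra).
  apply frac_le; [nra| nra|].
  replace (9*p^2*(q'*(p'+2*q'))) with (9*p*q'*(p*(p'+2*q'))) by ring.
  rewrite H4, H3.
  assert (E: q'*(q+2*p)*(q*(p+2*q)) - 9*p*q'*q^2 = q*q'*(2*(p-q)^2)) by ring.
  assert (0 <= q*q'*(2*(p-q)^2)).
  { apply Rmult_le_pos; [apply Rmult_le_pos; lra|]. apply Rmult_le_pos; [lra|]. apply pow2_ge_0. }
  lra.
Qed.

Lemma c_dec p q : 0 < p -> 0 < q -> q <= p ->
  cc (F (p,q)) <= cc (p,q) / 3 /\ snd (F (p,q)) <= fst (F (p,q)).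
Proof.
  intros Hp Hq Hqp. destruct (F_spec p q Hp Hq) as [H1 [H2 [H3 H4]]].
  unfold cc; cbn [fst snd].
  set (p' := fst (F (p,q))) in *. set (q' := snd (F (p,q))) in *. clearbody p' q'.
  split.
  - assert (Hx : p * (p' + 2*q') * 3 <= p * (p+2*q)).
    { rewrite H4. assert (0 <= (p - q) * (p + 3*q)) by (apply Rmult_le_pos; lra). nra. }
    apply (Rmult_le_reg_l (3*p)); [lra|].
    replace (3*p*((p+2*q)/3)) with (p*(p+2*q)) by field. lra.
  - assert (p * p' <= p * q) by nra.
    assert (p' <= q) by nra.
    nra.
Qed.

Lemma nat_unbounded r : exists N : nat, r < INR N.
Proof.
  destruct (archimed r) as [H1 _].
  exists (Z.to_nat (up r)).
  destruct (Z_le_gt_dec 0 (up r)).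
  - rewrite INR_IZR_INZ, Z2Nat.id by lia; lra.
  - assert (IZR (up r) < 0) by (apply IZR_lt; lia). pose proof (pos_INR (Z.to_nat (up r))). lra.
Qed.

Lemma fw_cv s0 : 0 < fst s0 -> 0 < snd s0 ->
  exists L, Un_cv (psum (fun k => cc (fw s0 k))) L.
Proof.
  intros H1 H2. pose proof (fw_pos s0 H1 H2) as Hpos.
  assert (Hc0 : forall k, 0 <= cc (fw s0 k)).
  { intro k; destruct (Hpos k); unfold cc; lra. }
  apply psum_cv; auto.
  assert (Hv0 : 0 < vv s0).
  { unfold vv. apply Rdiv_lt_0_compat; [nra|]. apply Rmult_lt_0_compat; lra. }
  assert (Hv : forall k, (1 + 8 * INR k) * vv s0 <= vv (fw s0 k)).
  { induction k as [|k IH]; [simpl; lra|].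
    rewrite fw_S, S_INR. destruct (fw s0 k) as [p q] eqn:E. destruct (Hpos k) as [Hp Hq].
    rewrite E in Hp, Hq. simpl in Hp, Hq.
    pose proof (v_grow p q Hp Hq). pose proof (pos_INR k). nra. }
  destruct (nat_unbounded (/ vv s0)) as [N HN].
  assert (HN1 : snd (fw s0 N) <= fst (fw s0 N)).
  { specialize (Hv N). destruct (Hpos N) as [Hp Hq].
    assert (1 <= vv (fw s0 N)).
    { assert (INR N * vv s0 > 1).
      { apply (Rmult_lt_compat_r (vv s0)) in HN; [|lra]. rewrite Rinv_l in HN; lra. }
      pose proof (pos_INR N). nra. }
    unfold vv in H. set (p := fst (fw s0 N)) in *. set (q := snd (fw s0 N)) in *.
    assert (Hd : 0 < q * (p + 2*q)) by nra.
    assert (q * (p+2*q) <= p^2).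
    { replace (p^2) with (p^2/(q*(p+2*q)) * (q*(p+2*q))) by (field; repeat split; lra). nra. }
    nra. }
  assert (Hge : forall j, snd (fw s0 (N+j)) <= fst (fw s0 (N+j))
                  /\ cc (fw s0 (S (N+j))) <= cc (fw s0 (N+j)) / 3).
  { induction j as [|j IH].
    - rewrite Nat.add_0_r. split; auto. rewrite fw_S.
      destruct (fw s0 N) as [p q] eqn:E. destruct (Hpos N) as [Hp Hq]. rewrite E in *.
      simpl in *. apply c_dec; auto.
    - rewrite Nat.add_succ_r. destruct IH as [IH1 _].
      assert (A1 : snd (fw s0 (S (N+j))) <= fst (fw s0 (S (N+j)))).
      { rewrite fw_S. destruct (fw s0 (N+j)) as [p q] eqn:E. destruct (Hpos (N+j)%nat) as [Hp Hq].
        rewrite E in *. simpl in *. apply c_dec; auto. }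
      split; auto. rewrite (fw_S s0 (S (N+j))).
      destruct (fw s0 (S (N+j))) as [p q] eqn:E. destruct (Hpos (S (N+j))) as [Hp Hq].
      rewrite E in *. simpl in *. apply c_dec; auto. }
  set (c := fun k => cc (fw s0 k)).
  assert (Hc : forall k, 0 <= c k) by exact Hc0.
  assert (Hg : forall j, c (S (N+j)) <= c (N+j)%nat / 3) by (intro j; exact (proj2 (Hge j))).
  change (exists B, forall K, psum c K <= B).
  clearbody c. clear Hc0 Hge.
  assert (Htail : forall j, psum c (N+j) + 3/2 * c (N+j)%nat <= psum c N + 3/2 * c N).
  { induction j as [|j IH]; [rewrite Nat.add_0_r; lra|].
    rewrite Nat.add_succ_r. simpl. specialize (Hg j). lra. }
  exists (psum c N + 3/2 * c N). intro K.
  destruct (le_lt_dec K N) as [HK|HK].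
  - pose proof (psum_mono c Hc K (N-K)) as HM.
    replace (K + (N-K))%nat with N in HM by lia. specialize (Hc N). lra.
  - specialize (Htail (K-N)%nat).
    specialize (Hc (N + (K-N))%nat). replace (N + (K-N))%nat with K in * by lia. lra.
Qed.

Lemma alg_m A B m0 m1 m2 : 0 < A -> 0 < B ->
  (A+B)*(m1+A) = A*m2 + B*m0 -> (A+B)^2 = B*(m2-m0) ->
  B*(m1-m0) = A^2 /\ m2 - m1 = B + 2*A.
Proof.
  intros HA HB H1 H3.
  assert (E1 : (A+B)*(B*(m1-m0)) = (A+B)*A^2).
  { replace ((A+B)*(B*(m1-m0))) with (A*(B*(m2-m0)) - B*(A*m2 + B*m0 - (A+B)*m1)) by ring.
    rewrite <- H3. replace (A*m2 + B*m0 - (A+B)*m1) with ((A+B)*A) by (rewrite <- H1; ring).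
    ring. }
  apply Rmult_eq_reg_l in E1; [|lra].
  split; auto.
  apply (Rmult_eq_reg_l A); [|lra].
  replace (A*(m2-m1)) with ((A*m2 + B*m0) - (A+B)*m1 + B*(m1-m0)) by ring.
  rewrite <- H1, E1. ring.
Qed.

Lemma alg_n A B n0 n1 n2 : 0 < A -> 0 < B ->
  (A+B)*(n1+B) = A*n2 + B*n0 -> (A+B)^2 = A*(n0-n2) ->
  A*(n1-n2) = B^2 /\ n0 - n1 = A + 2*B.
Proof.
  intros HA HB H1 H3. apply (alg_m B A n2 n1 n0); auto.
  - rewrite Rplus_comm, H1; ring.
  - rewrite Rplus_comm; auto.
Qed.

Lemma derive a b m n : ABMN a b m n -> (forall i, 0 < a i /\ 0 < b i) -> forall i,
  b i * (m i - m (i-1)%Z) = a i ^2 /\ m (i+1)%Z - m i = b i + 2 * a i /\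
  a i * (n i - n (i+1)%Z) = b i ^2 /\ n (i-1)%Z - n i = a i + 2 * b i.
Proof.
  intros H Hp i. destruct (H i) as [H1 [H2 [H3 H4]]]. destruct (Hp i).
  destruct (alg_m (a i) (b i) (m (i-1)%Z) (m i) (m (i+1)%Z)) as [? ?]; auto.
  destruct (alg_n (a i) (b i) (n (i-1)%Z) (n i) (n (i+1)%Z)) as [? ?]; auto.
Qed.

Lemma ABMN_of a b m n : (forall i, 0 < a i /\ 0 < b i) ->
  (forall i, m i - m (i-1)%Z = a i ^2 / b i) ->
  (forall i, n (i-1)%Z - n i = a i + 2 * b i) ->
  (forall i, a (i+1)%Z ^2 = b (i+1)%Z * (b i + 2 * a i) /\
             a i * (a (i+1)%Z + 2 * b (i+1)%Z) = b i ^2) ->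
  ABMN a b m n.
Proof.
  intros Hp Hm Hn Hl i. destruct (Hp i) as [Ha Hb]. destruct (Hp (i+1)%Z) as [Ha' Hb'].
  destruct (Hl i) as [L1 L2].
  assert (Em1 : m (i+1)%Z = m i + (b i + 2 * a i)).
  { pose proof (Hm (i+1)%Z) as X. replace (i+1-1)%Z with i in X by ring.
    rewrite L1 in X. field_simplify in X; [|lra]. lra. }
  assert (Em0 : m (i-1)%Z = m i - a i ^2 / b i) by (pose proof (Hm i); lra).
  assert (En1 : n (i+1)%Z = n i - b i ^2 / a i).
  { pose proof (Hn (i+1)%Z) as X. replace (i+1-1)%Z with i in X by ring.
    assert (a (i+1)%Z + 2 * b (i+1)%Z = b i ^2 / a i).
    { apply (Rmult_eq_reg_l (a i)); [|lra]. rewrite L2. field. lra. }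
    lra. }
  assert (En0 : n (i-1)%Z = n i + (a i + 2 * b i)) by (pose proof (Hn i); lra).
  rewrite Em1, Em0, En1, En0.
  repeat split; field; lra.
Qed.

Lemma inj1 a b a' b' D : 0 < a -> 0 < b -> 0 < a' -> 0 < b' ->
  b * D = a^2 -> b' * D = a'^2 -> a + 2*b = a' + 2*b' -> a = a' /\ b = b'.
Proof.
  intros Ha Hb Ha' Hb' H1 H2 H3.
  assert (HD : 0 < D) by nra.
  destruct (Rtotal_order a a') as [Hlt|[Heq|Hgt]].
  - exfalso. assert (b' < b) by lra. nra.
  - split; auto. lra.
  - exfalso. assert (b < b') by lra. nra.
Qed.

Lemma inj2 a b a' b' E : 0 < a -> 0 < b -> 0 < a' -> 0 < b' ->
  a * E = b^2 -> a' * E = b'^2 -> b + 2*a = b' + 2*a' -> a = a' /\ b = b'.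
Proof.
  intros. destruct (inj1 b a b' a' E) as [? ?]; auto.
Qed.

Lemma Zind2 (P : Z -> Prop) : (forall k : nat, P (Z.of_nat k)) ->
  (forall k : nat, P (- Z.of_nat k)%Z) -> forall i, P i.
Proof.
  intros H1 H2 i. destruct (Z_le_gt_dec 0 i).
  - replace i with (Z.of_nat (Z.to_nat i)) by lia. apply H1.
  - replace i with (- Z.of_nat (Z.to_nat (-i)))%Z by lia. apply H2.
Qed.

Lemma const_h (h : Z -> R) : (forall i, h i = h (i-1)%Z) -> forall i, h i = h 0%Z.
Proof.
  intros H. apply Zind2.
  - induction k as [|k IH]; [reflexivity|].
    rewrite H. replace (Z.of_nat (S k) - 1)%Z with (Z.of_nat k) by lia. exact IH.
  - induction k as [|k IH]; [reflexivity|].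
    rewrite <- IH, (H (- Z.of_nat k)%Z). f_equal. lia.
Qed.

Lemma lim_m_unique u v c : lim_minfty u 0 -> lim_minfty v 0 -> (forall i, u i - v i = c) -> c = 0.
Proof.
  intros Hu Hv Hc. destruct (Req_dec c 0) as [|Hne]; auto. exfalso.
  assert (He : 0 < Rabs c / 2) by (pose proof (Rabs_pos_lt c Hne); lra).
  destruct (Hu _ He) as [N1 H1]. destruct (Hv _ He) as [N2 H2].
  specialize (H1 (Z.min N1 N2) ltac:(lia)). specialize (H2 (Z.min N1 N2) ltac:(lia)).
  rewrite Rminus_0_r in H1, H2. rewrite <- (Hc (Z.min N1 N2)) in *.
  pose proof (Rabs_triang (u (Z.min N1 N2)) (- v (Z.min N1 N2))). rewrite Rabs_Ropp in H.
  unfold Rminus in *. lra.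
Qed.

Lemma lim_p_unique u v c : lim_pinfty u 0 -> lim_pinfty v 0 -> (forall i, u i - v i = c) -> c = 0.
Proof.
  intros Hu Hv Hc. destruct (Req_dec c 0) as [|Hne]; auto. exfalso.
  assert (He : 0 < Rabs c / 2) by (pose proof (Rabs_pos_lt c Hne); lra).
  destruct (Hu _ He) as [N1 H1]. destruct (Hv _ He) as [N2 H2].
  specialize (H1 (Z.max N1 N2) ltac:(lia)). specialize (H2 (Z.max N1 N2) ltac:(lia)).
  rewrite Rminus_0_r in H1, H2. rewrite <- (Hc (Z.max N1 N2)) in *.
  pose proof (Rabs_triang (u (Z.max N1 N2)) (- v (Z.max N1 N2))). rewrite Rabs_Ropp in H.
  unfold Rminus in *. lra.
Qed.

Lemma rels a b m n : default_ABMN a b m n -> forall i,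
  b i * (m i - m (i-1)%Z) = a i ^2 /\
  (m (i+1)%Z - m (i+1-1)%Z) = b i + 2 * a i /\
  a i * (n (i+1-1)%Z - n (i+1)%Z) = b i ^2 /\ n (i-1)%Z - n i = a i + 2 * b i.
Proof.
  intros [[H Hp] _] i. replace (i+1-1)%Z with i by ring. apply derive; auto.
Qed.

Lemma ratio_E a b m n x : default_ABMN a b m n -> central_ratio m n = x ->
  n (-1)%Z - n 0%Z = x.
Proof.
  intros [_ [_ [_ H1]]] H. unfold central_ratio in H. rewrite H1 in H. lra.
Qed.

Lemma part1 a b m n : default_ABMN a b m n -> 0 < central_ratio m n.
Proof.
  intros Hd. pose proof (rels a b m n Hd 0%Z) as [_ [_ [_ H]]].
  destruct Hd as [[_ Hp] [_ [_ H1]]]. unfold central_ratio. rewrite H1.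
  simpl in H. destruct (Hp 0%Z). rewrite H. lra.
Qed.

Lemma uniq a1 b1 m1 n1 a2 b2 m2 n2 x :
  default_ABMN a1 b1 m1 n1 -> central_ratio m1 n1 = x ->
  default_ABMN a2 b2 m2 n2 -> central_ratio m2 n2 = x ->
  forall i, a1 i = a2 i /\ b1 i = b2 i /\ m1 i = m2 i /\ n1 i = n2 i.
Proof.
  intros Hd1 Hx1 Hd2 Hx2.
  pose proof (rels _ _ _ _ Hd1) as R1. pose proof (rels _ _ _ _ Hd2) as R2.
  pose proof (ratio_E _ _ _ _ _ Hd1 Hx1) as E1. pose proof (ratio_E _ _ _ _ _ Hd2 Hx2) as E2.
  destruct Hd1 as [[_ P1] [Lm1 [Ln1 D1]]]. destruct Hd2 as [[_ P2] [Lm2 [Ln2 D2]]].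
  set (DD1 := fun i => m1 i - m1 (i-1)%Z). set (DD2 := fun i => m2 i - m2 (i-1)%Z).
  set (EE1 := fun i => n1 (i-1)%Z - n1 i). set (EE2 := fun i => n2 (i-1)%Z - n2 i).
  assert (ab_of : forall i, DD1 i = DD2 i -> EE1 i = EE2 i -> a1 i = a2 i /\ b1 i = b2 i).
  { intros i HD HE. destruct (R1 i) as [A1 [_ [_ A4]]]. destruct (R2 i) as [B1 [_ [_ B4]]].
    destruct (P1 i). destruct (P2 i).
    apply (inj1 (a1 i) (b1 i) (a2 i) (b2 i) (DD1 i)); auto. rewrite HD; auto. unfold EE1, EE2 in HE. lra. }
  assert (HDE : forall i, DD1 i = DD2 i /\ EE1 i = EE2 i).
  { apply Zind2.
    - induction k as [|k IH].
      + simpl. unfold DD1, DD2, EE1, EE2. simpl. rewrite D1, D2, E1, E2. auto.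
      + destruct IH as [IH1 IH2]. destruct (ab_of _ IH1 IH2) as [Ha Hb].
        replace (Z.of_nat (S k)) with (Z.of_nat k + 1)%Z by lia.
        destruct (R1 (Z.of_nat k)) as [_ [A2 [A3 _]]]. destruct (R2 (Z.of_nat k)) as [_ [B2 [B3 _]]].
        destruct (P1 (Z.of_nat k)). destruct (P2 (Z.of_nat k)).
        unfold DD1, DD2, EE1, EE2. split.
        * rewrite A2, B2, Ha, Hb; auto.
        * apply (Rmult_eq_reg_l (a1 (Z.of_nat k))); [|lra]. rewrite A3, Ha, B3, Hb; auto.
    - induction k as [|k IH].
      + simpl. unfold DD1, DD2, EE1, EE2. simpl. rewrite D1, D2, E1, E2. auto.
      + destruct IH as [IH1 IH2].
        set (i := (- Z.of_nat (S k))%Z).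
        assert (Hi : (- Z.of_nat k)%Z = (i+1)%Z) by (unfold i; lia).
        rewrite Hi in IH1, IH2.
        destruct (R1 i) as [A1 [A2 [A3 A4]]]. destruct (R2 i) as [B1 [B2 [B3 B4]]].
        destruct (P1 i). destruct (P2 i).
        assert (Hab : a1 i = a2 i /\ b1 i = b2 i).
        { apply (inj2 (a1 i) (b1 i) (a2 i) (b2 i) (EE1 (i+1)%Z)); auto.
          - rewrite IH2. unfold EE2. auto.
          - unfold DD1, DD2 in IH1. lra. }
        destruct Hab as [Ha Hb].
        unfold DD1, DD2, EE1, EE2. split.
        * apply (Rmult_eq_reg_l (b1 i)); [|lra]. rewrite A1, Hb, B1, Ha. auto.
        * rewrite A4, B4, Ha, Hb. auto. }
  assert (Hm : forall i, m1 i - m2 i = m1 0%Z - m2 0%Z).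
  { apply (const_h (fun i => m1 i - m2 i)). intro i. destruct (HDE i) as [H _].
    unfold DD1, DD2 in H. lra. }
  assert (Hn : forall i, n1 i - n2 i = n1 0%Z - n2 0%Z).
  { apply (const_h (fun i => n1 i - n2 i)). intro i. destruct (HDE i) as [_ H].
    unfold EE1, EE2 in H. lra. }
  pose proof (lim_m_unique _ _ _ Lm1 Lm2 Hm) as Hm0.
  pose proof (lim_p_unique _ _ _ Ln1 Ln2 Hn) as Hn0.
  intro i. destruct (HDE i) as [HD HE]. destruct (ab_of i HD HE).
  repeat split; auto.
  - specialize (Hm i). lra.
  - specialize (Hn i). lra.
Qed.

Definition mm (D : Z -> R) (L : R) (i : Z) : R :=
  L - psum (fun k => D (- Z.of_nat k)%Z) (Z.to_nat (-i)) + psum (fun k => D (Z.of_nat (S k))) (Z.to_nat i).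
Definition nn (E : Z -> R) (L : R) (i : Z) : R :=
  L - psum (fun k => E (Z.of_nat (S k))) (Z.to_nat i) + psum (fun k => E (- Z.of_nat k)%Z) (Z.to_nat (-i)).

Lemma mm_diff D L i : mm D L i - mm D L (i-1)%Z = D i.
Proof.
  unfold mm. destruct (Z_lt_le_dec 0 i) as [H|H].
  - replace (Z.to_nat (-i)) with 0%nat by lia. replace (Z.to_nat (-(i-1))) with 0%nat by lia.
    replace (Z.to_nat i) with (S (Z.to_nat (i-1))) by lia. cbn [psum].
    replace (Z.of_nat (S (Z.to_nat (i-1)))) with i by lia. ring.
  - destruct (Z.eq_dec i 0) as [->|Hne].
    + simpl. ring.
    + replace (Z.to_nat i) with 0%nat by lia. replace (Z.to_nat (i-1)) with 0%nat by lia.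
      replace (Z.to_nat (-(i-1))) with (S (Z.to_nat (-i))) by lia. simpl.
      replace (- Z.of_nat (Z.to_nat (-i)))%Z with i by lia. ring.
Qed.

Lemma nn_diff E L i : nn E L (i-1)%Z - nn E L i = E i.
Proof.
  rewrite <- (mm_diff E L i). unfold nn, mm. ring.
Qed.

Lemma mm_lim D L : Un_cv (psum (fun k => D (- Z.of_nat k)%Z)) L -> lim_minfty (mm D L) 0.
Proof.
  intros H eps He. destruct (H eps He) as [K HK].
  exists (- Z.of_nat K)%Z. intros i Hi. unfold mm.
  replace (Z.to_nat i) with 0%nat by lia. simpl psum at 2.
  specialize (HK (Z.to_nat (-i)) ltac:(lia)). unfold R_dist in HK.
  rewrite Rabs_minus_sym in HK. replace (L - psum (fun k => D (- Z.of_nat k)%Z) (Z.to_nat (-i)) + 0 - 0)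
    with (L - psum (fun k => D (- Z.of_nat k)%Z) (Z.to_nat (-i))) by ring. exact HK.
Qed.

Lemma nn_lim E L : Un_cv (psum (fun k => E (Z.of_nat (S k)))) L -> lim_pinfty (nn E L) 0.
Proof.
  intros H eps He. destruct (H eps He) as [K HK].
  exists (Z.of_nat K)%Z. intros i Hi. unfold nn.
  replace (Z.to_nat (-i)) with 0%nat by lia. simpl psum at 2.
  specialize (HK (Z.to_nat i) ltac:(lia)). unfold R_dist in HK.
  rewrite Rabs_minus_sym in HK. replace (L - psum (fun k => E (Z.of_nat (S k))) (Z.to_nat i) + 0 - 0)
    with (L - psum (fun k => E (Z.of_nat (S k))) (Z.to_nat i)) by ring. exact HK.
Qed.

Definition AA (a0 b0 : R) (i : Z) : R :=
  if (0 <=? i)%Z then fst (fw (a0,b0) (Z.to_nat i)) else snd (fw (b0,a0) (Z.to_nat (-i))).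
Definition BB (a0 b0 : R) (i : Z) : R :=
  if (0 <=? i)%Z then snd (fw (a0,b0) (Z.to_nat i)) else fst (fw (b0,a0) (Z.to_nat (-i))).

Lemma AA_p a0 b0 k : AA a0 b0 (Z.of_nat k) = fst (fw (a0,b0) k).
Proof. unfold AA. replace ((0 <=? Z.of_nat k)%Z) with true by (symmetry; apply Z.leb_le; lia).
  rewrite Nat2Z.id. auto. Qed.
Lemma BB_p a0 b0 k : BB a0 b0 (Z.of_nat k) = snd (fw (a0,b0) k).
Proof. unfold BB. replace ((0 <=? Z.of_nat k)%Z) with true by (symmetry; apply Z.leb_le; lia).
  rewrite Nat2Z.id. auto. Qed.
Lemma AA_n a0 b0 k : AA a0 b0 (- Z.of_nat k)%Z = snd (fw (b0,a0) k).
Proof. unfold AA. destruct k as [|k]; [reflexivity|].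
  replace ((0 <=? - Z.of_nat (S k))%Z) with false by (symmetry; apply Z.leb_gt; lia).
  f_equal. f_equal. lia. Qed.
Lemma BB_n a0 b0 k : BB a0 b0 (- Z.of_nat k)%Z = fst (fw (b0,a0) k).
Proof. unfold BB. destruct k as [|k]; [reflexivity|].
  replace ((0 <=? - Z.of_nat (S k))%Z) with false by (symmetry; apply Z.leb_gt; lia).
  f_equal. f_equal. lia. Qed.

Lemma AB_pos a0 b0 : 0 < a0 -> 0 < b0 -> forall i, 0 < AA a0 b0 i /\ 0 < BB a0 b0 i.
Proof.
  intros Ha Hb. apply Zind2; intro k.
  - rewrite AA_p, BB_p. apply fw_pos; simpl; auto.
  - rewrite AA_n, BB_n. destruct (fw_pos (b0,a0)) with (k:=k); simpl; auto.
Qed.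

Lemma AB_link a0 b0 : 0 < a0 -> 0 < b0 -> forall i,
  AA a0 b0 (i+1)%Z ^2 = BB a0 b0 (i+1)%Z * (BB a0 b0 i + 2 * AA a0 b0 i) /\
  AA a0 b0 i * (AA a0 b0 (i+1)%Z + 2 * BB a0 b0 (i+1)%Z) = BB a0 b0 i ^2.
Proof.
  intros Ha Hb.
  assert (Hp : forall k : nat, let i := Z.of_nat k in
    AA a0 b0 (i+1)%Z ^2 = BB a0 b0 (i+1)%Z * (BB a0 b0 i + 2 * AA a0 b0 i) /\
    AA a0 b0 i * (AA a0 b0 (i+1)%Z + 2 * BB a0 b0 (i+1)%Z) = BB a0 b0 i ^2).
  { intro k. cbv zeta. replace (Z.of_nat k + 1)%Z with (Z.of_nat (S k)) by lia.
    rewrite !AA_p, !BB_p, fw_S. destruct (fw (a0,b0) k) as [p q] eqn:E.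
    destruct (fw_pos (a0,b0) ltac:(simpl; auto) ltac:(simpl; auto) k) as [Hp0 Hq0].
    rewrite E in Hp0, Hq0. cbn [fst snd] in *.
    destruct (F_spec p q Hp0 Hq0) as [_ [_ [H3 H4]]]. split; auto. }
  assert (Hn : forall k : nat, let i := (- Z.of_nat (S k))%Z in
    AA a0 b0 (i+1)%Z ^2 = BB a0 b0 (i+1)%Z * (BB a0 b0 i + 2 * AA a0 b0 i) /\
    AA a0 b0 i * (AA a0 b0 (i+1)%Z + 2 * BB a0 b0 (i+1)%Z) = BB a0 b0 i ^2).
  { intro k. cbv zeta. replace (- Z.of_nat (S k) + 1)%Z with (- Z.of_nat k)%Z by lia.
    rewrite !AA_n, !BB_n, fw_S. destruct (fw (b0,a0) k) as [p q] eqn:E.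
    destruct (fw_pos (b0,a0) ltac:(simpl; auto) ltac:(simpl; auto) k) as [Hp0 Hq0].
    rewrite E in Hp0, Hq0. cbn [fst snd] in *.
    destruct (F_spec p q Hp0 Hq0) as [_ [_ [H3 H4]]]. split; [lra|]. rewrite H3. ring. }
  apply Zind2; intro k.
  - apply (Hp k).
  - destruct k as [|k]. + apply (Hp 0%nat). + apply (Hn k).
Qed.

Lemma cc_F p q : 0 < p -> 0 < q -> cc (F (p,q)) = q^2/p.
Proof.
  intros Hp Hq. destruct (F_spec p q Hp Hq) as [_ [_ [_ H]]]. unfold cc.
  apply (Rmult_eq_reg_l p); [|lra]. rewrite H. field. lra.
Qed.

Lemma fw_shift s k : fw s (S k) = fw (F s) k.
Proof. unfold fw. apply Nat.iter_succ_r. Qed.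

Lemma existence x : 0 < x -> exists a b m n : Z -> R, default_ABMN a b m n /\ central_ratio m n = x.
Proof.
  intros Hx.
  set (r := sqrt (1 + 8*x)).
  assert (Hr2 : r * r = 1 + 8*x) by (apply sqrt_sqrt; lra).
  assert (Hr0 : 0 <= r) by apply sqrt_pos.
  set (a0 := (-1 + r)/4). set (b0 := a0^2).
  assert (Ha0 : 0 < a0) by (unfold a0; nra).
  assert (Hb0 : 0 < b0) by (unfold b0; nra).
  assert (Hab0 : a0 + 2*b0 = x) by (unfold b0, a0; nra).
  pose proof (AB_pos a0 b0 Ha0 Hb0) as Hpos.
  set (A := AA a0 b0). set (B := BB a0 b0).
  set (D := fun i => A i ^2 / B i). set (E := fun i => A i + 2 * B i).
  assert (HFA : 0 < fst (F (a0,b0)) /\ 0 < snd (F (a0,b0))) by (destruct (F_spec a0 b0); tauto).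
  assert (HFB : 0 < fst (F (b0,a0)) /\ 0 < snd (F (b0,a0))) by (destruct (F_spec b0 a0); tauto).
  destruct (fw_cv (F (b0,a0)) (proj1 HFB) (proj2 HFB)) as [Lm HLm].
  destruct (fw_cv (F (a0,b0)) (proj1 HFA) (proj2 HFA)) as [Ln HLn].
  assert (HDn : forall k, D (- Z.of_nat k)%Z = cc (fw (F (b0,a0)) k)).
  { intro k. unfold D, A, B. rewrite AA_n, BB_n, <- fw_shift, fw_S.
    destruct (fw (b0,a0) k) as [p q] eqn:Ek.
    destruct (fw_pos (b0,a0) ltac:(simpl; auto) ltac:(simpl; auto) k) as [Hp Hq].
    rewrite Ek in Hp, Hq. cbn [fst snd] in *. rewrite cc_F; auto. }
  assert (HEp : forall k, E (Z.of_nat (S k)) = cc (fw (F (a0,b0)) k)).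
  { intro k. unfold E, A, B. rewrite AA_p, BB_p, <- fw_shift. reflexivity. }
  assert (HLm' : Un_cv (psum (fun k => D (- Z.of_nat k)%Z)) Lm).
  { intros eps He. destruct (HLm eps He) as [N HN]. exists N. intros k Hk.
    rewrite (psum_ext _ _ HDn). apply HN; auto. }
  assert (HLn' : Un_cv (psum (fun k => E (Z.of_nat (S k)))) Ln).
  { intros eps He. destruct (HLn eps He) as [N HN]. exists N. intros k Hk.
    rewrite (psum_ext _ _ HEp). apply HN; auto. }
  exists A, B, (mm D Lm), (nn E Ln).
  assert (HD0 : mm D Lm 0%Z - mm D Lm (-1)%Z = 1).
  { pose proof (mm_diff D Lm 0%Z) as Hm0. simpl in Hm0. rewrite Hm0. unfold D, A, B.
    change 0%Z with (Z.of_nat 0). rewrite AA_p, BB_p. simpl. unfold b0. field. lra. }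
  assert (HE0 : nn E Ln (-1)%Z - nn E Ln 0%Z = x).
  { pose proof (nn_diff E Ln 0%Z) as Hn0. simpl in Hn0. rewrite Hn0. unfold E, A, B.
    change 0%Z with (Z.of_nat 0). rewrite AA_p, BB_p. simpl. exact Hab0. }
  split; [split; [split|split; [|split]]|].
  - apply ABMN_of.
    + exact Hpos.
    + intro i. apply mm_diff.
    + intro i. apply nn_diff.
    + apply AB_link; auto.
  - exact Hpos.
  - apply mm_lim; auto.
  - apply nn_lim; auto.
  - exact HD0.
  - unfold central_ratio. rewrite HD0, HE0. field.
Qed.

Theorem mainTheorem8 :
  (forall a b m n : Z -> R, default_ABMN a b m n -> 0 < central_ratio m n) /\
  (forall x : R, 0 < x ->
     (exists a b m n : Z -> R, default_ABMN a b m n /\ central_ratio m n = x) /\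
     (forall a1 b1 m1 n1 a2 b2 m2 n2 : Z -> R,
        default_ABMN a1 b1 m1 n1 -> central_ratio m1 n1 = x ->
        default_ABMN a2 b2 m2 n2 -> central_ratio m2 n2 = x ->
        forall i : Z, a1 i = a2 i /\ b1 i = b2 i /\ m1 i = m2 i /\ n1 i = n2 i)).
Proof.
  split.
  - exact part1.
  - intros x Hx. split.
    + exact (existence x Hx).
    + intros. eapply uniq; eauto.
Qed.
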